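(* Let $A=[A_{ij}]\in\{0,1\}^{m\times m}$ be an invertible matrix each of whose rows has at most two non-zero entries. Then every entry of $A^{-1}$ lies in $\{0,\pm1,\pm\tfrac12\}$. *)

(* Defs.v *)
From mathcomp Require Import all_boot all_order all_algebra.
Set Implicit Arguments. Unset Strict Implicit. Unset Printing Implicit Defensive.

(* Main.v *)
Require Import Defs.
From mathcomp Require Import all_boot all_order all_algebra.
From mathcomp Require Import lra.
Import GRing.Theory Num.Theory.
Local Open Scope ring_scope.

Definition RS m (A : 'M[rat]_m) r (v : 'I_m -> rat) := \sum_k A r k * v k.
Arguments RS {m}.


Lemma RS_set m (A : 'M[rat]_m) r v
  (h01 : forall i j, A i j = 0 \/ A i j = 1) :
  RS A r v = \sum_(k in [set k | A r k != 0]) v k.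
Proof.
rewrite /RS (bigID (fun k => A r k != 0)) /= [X in _ + X]big1 ?addr0.
  apply: eq_big => [k|k]; rewrite ?inE //.
  by case: (h01 r k) => ->; rewrite ?eqxx ?mul1r.
by move=> k /negPn/eqP ->; rewrite mul0r.
Qed.

Lemma row_cases m (A : 'M[rat]_m) r
  (h01 : forall i j, A i j = 0 \/ A i j = 1)
  (hrow : forall i, (#|[set j | A i j != 0%R]| <= 2)%N) :
  (forall v, RS A r v = 0) \/ (exists a, forall v, RS A r v = v a) \/
  (exists a b, a != b /\ forall v, RS A r v = v a + v b).
Proof.
pose S := [set j | A r j != 0].
have hS : (#|S| <= 2)%N by exact: hrow.
have HS v : RS A r v = \sum_(k in S) v k by exact: RS_set.
move: hS; case E: #|S| => [|[|[|n]]] // _.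
- left=> v; rewrite HS (cards0_eq E) big_set0 //.
- have /cards1P [a Sa] : #|S| == 1%N by rewrite E.
  by right; left; exists a => v; rewrite HS Sa big_set1.
- have /cards2P [a [b [ab Sab]]] : #|S| == 2%N by rewrite E.
  right; right; exists a, b; split => // v.
  by rewrite HS Sab big_setU1 ?big_set1 // inE.
Qed.

Lemma sol m (A : 'M[rat]_m) j (hinv : A \in unitmx) r :
  RS A r (fun k => invmx A k j) = (r == j)%:R.
Proof.
have := congr1 (fun M : 'M_m => M r j) (mulmxV hinv).
by rewrite /= !mxE => <-.
Qed.

Lemma uniq_sol m (A : 'M[rat]_m) j (hinv : A \in unitmx) (v : 'I_m -> rat) :
  (forall r, RS A r v = (r == j)%:R) -> forall k, v k = invmx A k j.
Proof.
move=> H k.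
have E : A *m (\col_i v i) = \col_r (r == j)%:R.
  apply/matrixP => r c; rewrite ord1 !mxE -H /RS; apply eq_bigr => i _; rewrite mxE.
  done.
have := congr1 (fun M => (invmx A *m M) k 0) E; rewrite mulKmx // !mxE => ->.
rewrite (bigD1 j) //= !mxE eqxx mulr1 big1 ?addr0 // => i /negbTE ij.
by rewrite !mxE ij mulr0.
Qed.

Lemma odd_rows m (A : 'M[rat]_m) j (hinv : A \in unitmx)
  (h01 : forall i j, A i j = 0 \/ A i j = 1)
  (hrow : forall i, (#|[set j | A i j != 0%R]| <= 2)%N)
  (g : rat -> rat) (godd : forall s, g (- s) = - g s) r :
  r != j -> RS A r (fun k => g (invmx A k j)) = 0.
Proof.
move=> rj.
have g0 : g 0 = 0 by have := godd 0; rewrite oppr0 => H; lra.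
have s := sol _ _ j hinv r; rewrite (negbTE rj) in s.
case: (row_cases _ _ r h01 hrow) => [H|[[a H]|[a [b [_ H]]]]]; rewrite H; rewrite H in s.
- done.
- by rewrite s g0.
- have -> : invmx A a j = - invmx A b j by move: s; rewrite /= => s; lra.
  by rewrite godd addNr.
Qed.

Theorem lemma1 (m : nat) (A : 'M[rat]_m)
  (h01 : forall i j, A i j = 0 \/ A i j = 1)
  (hrow : forall i, (#|[set j | A i j != 0%R]| <= 2)%N)
  (hinv : A \in unitmx) :
  forall i j, (invmx A) i j \in [:: 0; 1; -1; 1/2; -(1/2)].
Proof.
move=> i j.
have hj := sol _ _ j hinv j; rewrite eqxx in hj.
have key : forall g : rat -> rat, (forall s, g (- s) = - g s) ->
    RS A j (fun k => g (invmx A k j)) = 1 -> forall k, g (invmx A k j) = invmx A k j.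
  move=> g godd gj; apply: uniq_sol => // r.
  case: (eqVneq r j) => [->|rj]; first by rewrite ?eqxx gj.
  by rewrite ?(negbTE rj); exact: (odd_rows _ _ _ hinv h01 hrow g godd).
suff vals : invmx A i j = 0 \/ invmx A i j = 1 \/ invmx A i j = -1 \/
    invmx A i j = 1/2 \/ invmx A i j = -(1/2).
  by rewrite !inE; case: vals => [->|[->|[->|[->|->]]]]; rewrite eqxx ?orbT.
case: (row_cases _ _ j h01 hrow) => [H|[[a H]|[a [b [ab H]]]]]; rewrite H /= ?mulr1n in hj.
- by move/eqP: hj; rewrite eq_sym oner_eq0.
- pose g (s : rat) := if s ^+ 2 == 1 then s else 0.
  have godd : forall s, g (- s) = - g s.
    by move=> s; rewrite /g sqrrN; case: ifP => _; rewrite ?oppr0.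
  have e1 : RS A j (fun k => g (invmx A k j)) = 1 by rewrite H /g hj expr1n eqxx.
  have := key g godd e1 i; rewrite /g.
  case: ifP => [|_ <-]; last by left.
  rewrite -[X in _ == X](expr1n _ 2) eqf_sqr => /orP [] /eqP -> _; lra.
- set t := invmx A a j.
  have hb : invmx A b j = 1 - t by rewrite /t; lra.
  pose g (s : rat) := if (s ^+ 2 == t ^+ 2) || (s ^+ 2 == (1 - t) ^+ 2) then s else 0.
  have godd : forall s, g (- s) = - g s.
    by move=> s; rewrite /g sqrrN; case: ifP => _; rewrite ?oppr0.
  have e1 : RS A j (fun k => g (invmx A k j)) = 1.
    by rewrite H /g hb !eqxx ?orbT /= -/t; lra.
  have := key g godd e1 i; rewrite /g.
  have ht : t = 0 \/ t = 1 \/ t = 1/2.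
    case: (eqVneq t 0) => [|t0]; first by left.
    case: (eqVneq t 1) => [|t1]; first by right; left.
    case: (eqVneq t (1/2)) => [|th]; first by right; right.
    exfalso.
    have t1' : 1 - t != 0 by apply: contra t1; rewrite subr_eq0 eq_sym.
    pose g2 (s : rat) := if s ^+ 2 == t ^+ 2 then 2 * s
                 else if s ^+ 2 == (1 - t) ^+ 2 then (1 - 2 * t) / (1 - t) * s else 0.
    have g2odd : forall s, g2 (- s) = - g2 s.
      by move=> s; rewrite /g2 sqrrN; case: ifP => _; [|case: ifP => _]; rewrite ?oppr0 ?mulrN.
    have nq : ((1 - t) ^+ 2 == t ^+ 2) = false.
      apply/negbTE; apply: contra th => /eqP; rewrite !expr2 => E; apply/eqP; lra.
    have e2 : RS A j (fun k => g2 (invmx A k j)) = 1.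
      rewrite H /g2 hb -/t eqxx nq eqxx divfK //; lra.
    have := key g2 g2odd e2 a; rewrite /g2 -/t eqxx => E.
    by apply: (negP t0); apply/eqP; lra.
  case: ifP => [|_ <-]; last by left.
  move=> /orP [] ; rewrite eqf_sqr => /orP [] /eqP -> _; case: ht => [->|[->|->]]; lra.
Qed.
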